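(* Let $0<\alpha<\beta$ and let $A:\mathcal{C}_{\alpha}(\mathbb{R})\to\mathcal{C}_{\beta}(\mathbb{R})$ be a bounded linear operator. For $r>0$ let $B_r=\{f\in\mathcal{C}_{\alpha}(\mathbb{R}):\ |f|_{\alpha}<r\}$. Suppose that for every $X>0$ (and every $r>0$) the family of functions $\{(Af)|_{[-X,X]}:\ f\in B_r\}$ is uniformly equicontinuous. Then $A$, regarded as an operator $\mathcal{C}_{\alpha}(\mathbb{R})\to\mathcal{C}_{\alpha}(\mathbb{R})$, is compact.
   Context: For $\gamma\ge 0$, $\mathcal{C}_{\gamma}(\mathbb{R})$ denotes the Banach space of continuous functions $f:\mathbb{R}\to\mathbb{C}$ with $|f|_{\gamma}=\sup\{(1+|x|)^{\gamma}|f(x)|:\ x\in\mathbb{R}\}<\infty$, normed by $|\cdot|_{\gamma}$. *)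

(* Defs.v *)
From HB Require Import structures.
From mathcomp Require Import all_boot all_order all_algebra.
From mathcomp Require Import all_classical all_reals all_analysis.
From mathcomp Require Import complex.
Set Implicit Arguments. Unset Strict Implicit. Unset Printing Implicit Defensive.
Import Order.TTheory GRing.Theory Num.Theory.
Local Open Scope ring_scope.
Local Open Scope classical_set_scope.

Definition cabs (R : realType) (z : complex R) : R := ComplexField.Normc.normc z.

Definition wt (R : realType) (gamma x : R) : R := (1 + `|x|) `^ gamma.

Definition ccontinuous (R : realType) (f : R -> complex R) : Prop :=
  forall x eps, 0 < eps -> exists2 delta, 0 < delta &
    forall y, `|x - y| < delta -> cabs (f x - f y) < eps.

Definition inC (R : realType) (gamma : R) (f : R -> complex R) : Prop :=
  ccontinuous f /\ exists M : R, forall x, wt gamma x * cabs (f x) <= M.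

Definition wnorm (R : realType) (gamma : R) (f : R -> complex R) : R :=
  sup [set wt gamma x * cabs (f x) | x in [set: R]].

(* Main.v *)
Require Import Defs.
From HB Require Import structures.
From mathcomp Require Import all_boot all_order all_algebra.
From mathcomp Require Import all_classical all_reals all_analysis.
From mathcomp Require Import complex.
From mathcomp Require Import ring lra.
Import Order.TTheory GRing.Theory Num.Theory numFieldNormedType.Exports.
Local Open Scope ring_scope.
Local Open Scope classical_set_scope.


Notation cRe := complex.Re.
Notation cIm := complex.Im.

Section Cabs.
Variable R : realType.
Lemma cabsE (a b : R) : cabs (a +i* b)%C = Num.sqrt (a^+2 + b^+2). Proof. by []. Qed.
Lemma ReB (z w : complex R) : cRe (z - w) = cRe z - cRe w. Proof. by case: z => a b; case: w => c d. Qed.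
Lemma ImB (z w : complex R) : cIm (z - w) = cIm z - cIm w. Proof. by case: z => a b; case: w => c d. Qed.
Lemma cabsD (z w : complex R) : cabs (z + w) <= cabs z + cabs w.
Proof. exact: (@le_normcD R z w). Qed.
Lemma cabsN (z : complex R) : cabs (- z) = cabs z.
Proof. exact: (@normcN R z). Qed.
Lemma cabs_ge0 (z : complex R) : (0:R) <= cabs z.
Proof. case: z => a b; rewrite cabsE sqrtr_ge0 //. Qed.
Lemma cabs_Re (z : complex R) : `|cRe z| <= cabs z.
Proof. case: z => a b; rewrite cabsE /= -ler_sqr ?nnegrE ?sqr_sqrtr ?addr_ge0 ?sqr_ge0 ?sqrtr_ge0 //.
rewrite real_normK ?num_real // lerDl sqr_ge0 //. Qed.
Lemma cabs_Im (z : complex R) : `|cIm z| <= cabs z.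
Proof. case: z => a b; rewrite cabsE /= -ler_sqr ?nnegrE ?sqr_sqrtr ?addr_ge0 ?sqr_ge0 ?sqrtr_ge0 //.
rewrite real_normK ?num_real // lerDr sqr_ge0 //. Qed.
Lemma cabs_le (z : complex R) : cabs z <= `|cRe z| + `|cIm z|.
Proof. case: z => a b; rewrite cabsE /= -ler_sqr ?nnegrE ?sqr_sqrtr ?addr_ge0 ?sqr_ge0 ?sqrtr_ge0 //.
rewrite sqrrD !real_normK ?num_real // -addrA lerD2l lerDr mulrn_wge0 // mulr_ge0 //. Qed.
Lemma cabsB (z w : complex R) : cabs (z - w) = cabs (w - z).
Proof. by rewrite -cabsN opprB. Qed.
Lemma cabs_sub (a b : complex R) : cabs (a - b) <= cabs a + cabs b.
Proof. by apply: le_trans (cabsD _ _) _; rewrite cabsN. Qed.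
Lemma cabs_tri3 (a b c d : complex R) :
  cabs (a - d) <= cabs (a - b) + cabs (b - c) + cabs (c - d).
Proof.
have -> : a - d = (a - b) + ((b - c) + (c - d)).
  by rewrite !addrA subrK addrNK.
apply: le_trans (cabsD _ _) _; rewrite -(addrA (cabs (a - b))) lerD2l; exact: cabsD.
Qed.

Lemma wt_ge1 (g x : R) : 0 <= g -> 1 <= wt g x.
Proof.
move=> g0; rewrite /wt.
have h1 : 1 <= 1 + `|x| by rewrite lerDl.
by have := ler_powR h1 g0; rewrite powRr0.
Qed.
Lemma wt_gt0 (g x : R) : 0 <= g -> 0 < wt g x.
Proof. by move=> g0; apply: (lt_le_trans ltr01 (wt_ge1 _ x g0)). Qed.
Lemma wt_le (a b x : R) : a <= b -> wt a x <= wt b x.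
Proof. move=> ab; rewrite /wt.
have h1 : 1 <= 1 + `|x| by rewrite lerDl.
exact: (ler_powR h1 ab). Qed.
Lemma wt_mono (g x y : R) : 0 <= g -> `|x| <= `|y| -> wt g x <= wt g y.
Proof.
move=> g0 xy; rewrite /wt; apply: (ge0_ler_powR g0); rewrite ?nnegrE ?addr_ge0 //.
by rewrite lerD2l.
Qed.
Lemma le_wt_mul (g x : R) (c : R) : 0 <= g -> 0 <= c -> c <= wt g x * c.
Proof. by move=> g0 c0; rewrite ler_peMl // wt_ge1. Qed.

Lemma wnorm_ub (g : R) f : inC g f -> forall x, wt g x * cabs (f x) <= wnorm g f.
Proof.
move=> [_ [M HM]] x; rewrite /wnorm; apply: sup_upper_bound; last by exists x.
split; first by exists (wt g 0 * cabs (f 0)); exists 0.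
by exists M => _ [y _ <-].
Qed.
Lemma wnorm_le (g e : R) f : (forall x, wt g x * cabs (f x) <= e) -> wnorm g f <= e.
Proof.
move=> H; rewrite /wnorm; apply: ge_sup; first by exists (wt g 0 * cabs (f 0)); exists 0.
by move=> _ [y _ <-].
Qed.
Lemma wnorm_ge0 (g : R) f : 0 <= g -> 0 <= wnorm g f.
Proof.
move=> g0; rewrite /wnorm; case: (pselect (has_sup [set wt g x * cabs (f x) | x in [set: R]])) => hs.
  apply: le_trans (sup_upper_bound hs _); last by exists 0.
  by rewrite mulr_ge0 ?cabs_ge0 // ltW // wt_gt0.
by rewrite sup_out.
Qed.

Lemma small_inv (e : R) : 0 < e -> exists k : nat, k.+1%:R^-1 < e.
Proof.
move=> e0; exists (Num.truncn e^-1).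
by rewrite -ltf_pV2 ?(posrE,invr_gt0)// invrK truncnS_gt.
Qed.
End Cabs.
Arguments cabsE {R}.
Arguments ReB {R}.
Arguments ImB {R}.
Arguments cabsD {R}.
Arguments cabsN {R}.
Arguments cabs_ge0 {R}.
Arguments cabs_Re {R}.
Arguments cabs_Im {R}.
Arguments cabs_le {R}.
Arguments cabsB {R}.
Arguments cabs_sub {R}.
Arguments cabs_tri3 {R}.
Arguments wt_ge1 {R}.
Arguments wt_gt0 {R}.
Arguments wt_le {R}.
Arguments wt_mono {R}.
Arguments le_wt_mul {R}.
Arguments wnorm_ub {R}.
Arguments wnorm_le {R}.
Arguments wnorm_ge0 {R}.
Arguments small_inv {R}.


Definition infin (P : nat -> Prop) := forall N, exists n, (N <= n)%N /\ P n.

Lemma inf_split P Q : infin P -> infin (fun n => P n /\ Q n) \/ infin (fun n => P n /\ ~ Q n).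
Proof.
move=> HP; case: (pselect (infin (fun n => P n /\ Q n))) => [|h1]; first by left.
right => N2; move/existsNP: h1 => [N1 H1].
have [n [Hn Pn]] := HP (maxn N1 N2).
exists n; split; first by apply: leq_trans Hn; apply: leq_maxr.
split => // q; apply: H1; exists n; split => //.
by apply: leq_trans Hn; apply: leq_maxl.
Qed.

Section Refine.
Variable R : realType.

Lemma refine1 (h : nat -> R) (s : R) : 0 < s -> forall (N : nat) (a : R) I, infin I ->
  (forall n, I n -> a <= h n <= a + N%:R * s) ->
  exists J, infin J /\ (forall n, J n -> I n) /\ (forall m n, J m -> J n -> `|h m - h n| <= s).
Proof.
move=> s0; elim=> [|N IH] a I HI Hb.
  exists I; split => //; split => // m n /Hb + /Hb; rewrite mul0r addr0.
  by rewrite -!eq_le => /eqP <- /eqP <-; rewrite subrr normr0 ltW.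
case: (inf_split I (fun n => h n <= a + s) HI) => [H1|H2].
  exists (fun n => I n /\ h n <= a + s); split => //; split => [n []//|m n [Im hm] [In hn]].
  have /andP[am _] := Hb _ Im; have /andP[an _] := Hb _ In.
  rewrite ler_norml; apply/andP; split; lra.
have Hb' : forall n, (I n /\ ~ h n <= a + s) -> a + s <= h n <= a + s + N%:R * s.
  move=> n [In hn]; have /andP[_ hb] := Hb _ In; apply/andP; split.
    by rewrite ltW // ltNge; apply/negP.
  by move: hb; rewrite -addn1 natrD mulrDl mul1r; lra.
have [J [HJ [JI Hd]]] := IH (a + s) _ H2 Hb'.
by exists J; split => //; split => // n /JI [].
Qed.

Lemma refine_bnd (h : nat -> R) (B s : R) : 0 < s -> (forall n, `|h n| <= B) -> forall I, infin I ->
  exists J, infin J /\ (forall n, J n -> I n) /\ (forall m n, J m -> J n -> `|h m - h n| <= s).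
Proof.
move=> s0 hB I HI; apply: (refine1 h s s0 (Num.truncn (2 * B / s)).+1 (- B) I HI) => n _.
have := hB n; rewrite ler_norml => /andP[h1 h2]; rewrite h1 /=.
have := truncnS_gt (2 * B / s); set k := (Num.truncn _).+1%:R => hk.
have : 2 * B < k * s by rewrite -ltr_pdivrMr.
lra.
Qed.

Lemma refine_fam (h : nat -> nat -> R) (B s : R) : 0 < s -> (forall j n, `|h j n| <= B) ->
  forall K I, infin I ->
  exists J, infin J /\ (forall n, J n -> I n) /\
    (forall j, (j < K)%N -> forall m n, J m -> J n -> `|h j m - h j n| <= s).
Proof.
move=> s0 hB; elim=> [|K IH] I HI; first by exists I.
have [J [HJ [JI Hd]]] := IH I HI.
have [J' [HJ' [JI' Hd']]] := refine_bnd (h K) B s s0 (hB K) J HJ.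
exists J'; split => //; split => [n /JI' /JI //|j]; rewrite ltnS leq_eqVlt => /orP[/eqP ->//|jK].
by move=> m n /JI' + /JI'; apply: Hd.
Qed.
End Refine.
Arguments refine1 {R}.
Arguments refine_bnd {R}.
Arguments refine_fam {R}.


Lemma diag_extract (P : nat -> nat -> nat -> Prop) :
  (forall k I, infin I -> exists J, infin J /\ (forall n, J n -> I n) /\ forall m n, J m -> J n -> P k m n) ->
  exists phi : nat -> nat, (forall m n, (m < n)%N -> (phi m < phi n)%N) /\
    forall k m n, (k <= m)%N -> (k <= n)%N -> P k (phi m) (phi n).
Proof.
move=> H.
have : forall kI : nat * (nat -> Prop), exists J : nat -> Prop, infin kI.2 ->
    infin J /\ (forall n, J n -> kI.2 n) /\ forall m n, J m -> J n -> P kI.1 m n.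
  move=> [k I] /=; case: (pselect (infin I)) => hI; last by exists I.
  by have [J HJ] := H k I hI; exists J.
move=> /choice [F HF].
have : forall IN : (nat -> Prop) * nat, exists n : nat, infin IN.1 -> (IN.2 <= n)%N /\ IN.1 n.
  move=> [I N] /=; case: (pselect (infin I)) => hI; last by exists 0%N.
  by have [n Hn] := hI N; exists n.
move=> /choice [G HG].
pose fix Is k := F (k, if k is k'.+1 then Is k' else (fun _ => True)).
have Iinf : forall k, infin (Is k) /\ (forall n, Is k n -> (if k is k'.+1 then Is k' else (fun _ => True)) n)
    /\ forall m n, Is k m -> Is k n -> P k m n.
  elim=> [|k [IH _]]; first by apply: (HF (0%N, _)) => N; exists N.
  exact: (HF (k.+1, Is k)).
have Isub : forall k m, (k <= m)%N -> forall n, Is m n -> Is k n.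
  move=> k; elim=> [|m IH]; first by rewrite leqn0 => /eqP ->.
  rewrite leq_eqVlt => /orP[/eqP ->//|km] n /(proj1 (proj2 (Iinf m.+1))) /=.
  exact: IH.
pose fix phi k := G (Is k, if k is k'.+1 then (phi k').+1 else 0%N).
have phiI : forall k, Is k (phi k) /\ ((if k is k'.+1 then (phi k').+1 else 0%N) <= phi k)%N.
  case=> [|k]; first by have [] := HG (Is 0%N, 0%N) (proj1 (Iinf 0%N)).
  by have [] := HG (Is k.+1, (phi k).+1) (proj1 (Iinf k.+1)).
exists phi; split.
  move=> m; elim=> [//|n IH]; rewrite ltnS leq_eqVlt => /orP[/eqP ->|/IH mn].
    exact: (proj2 (phiI n.+1)).
  exact: (ltn_trans mn (proj2 (phiI n.+1))).
move=> k m n km kn; apply: (proj2 (proj2 (Iinf k))).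
  exact: (Isub k m km _ (proj1 (phiI m))).
exact: (Isub k n kn _ (proj1 (phiI n))).
Qed.


Lemma tail_bound (R : realType) (alpha beta M eps : R) (v : R -> complex R) :
  0 < alpha -> alpha < beta -> 0 <= M -> 0 < eps ->
  (forall x, wt beta x * cabs (v x) <= M) ->
  forall x, (4 * M / eps + 1) `^ (beta - alpha)^-1 + 1 <= `|x| ->
  wt alpha x * cabs (v x) <= eps / 4.
Proof.
move=> a0 ab M0 e0 HM x.
set gam := beta - alpha; set Q := 4 * M / eps + 1 => Xx.
have g0 : 0 < gam by rewrite /gam subr_gt0.
have Q0 : 0 < Q by rewrite /Q; apply: ltr_wpDl => //; rewrite divr_ge0 ?mulr_ge0 // ltW.
set b := 1 + `|x|.
have b0 : 0 < b by rewrite /b ltr_wpDr.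
have hQ : Q <= b `^ gam.
  have e1 : Q = (Q `^ gam^-1) `^ gam.
    by rewrite -powRrM mulVf ?gt_eqF // powRr1 // ltW.
  rewrite {1}e1; apply: (ge0_ler_powR (ltW g0)); rewrite ?nnegrE ?powR_ge0 ?ltW //.
  by move: Xx; rewrite /b; lra.
have hw : wt beta x = wt alpha x * b `^ gam.
  rewrite /wt -powRD; last by apply/implyP => _; rewrite gt_eqF.
  by congr (_ `^ _); rewrite /gam; lra.
set c := wt alpha x * cabs (v x).
have c0 : 0 <= c by rewrite /c mulr_ge0 ?cabs_ge0 // ltW // wt_gt0 // ltW.
have cQ : c * Q <= M.
  apply: le_trans (HM x); rewrite hw.
  have -> : wt alpha x * b `^ gam * cabs (v x) = c * b `^ gam by rewrite /c mulrAC.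
  by apply: ler_wpM2l.
move: cQ; rewrite /Q; set t := M / eps.
have Mt : M = t * eps by rewrite /t divfK // gt_eqF.
have t0 : 0 <= t by rewrite divr_ge0 // ltW.
have -> : 4 * M / eps + 1 = 4 * t + 1 by rewrite /t mulrA.
rewrite Mt => h; rewrite ler_pdivlMr //.
have h4 : 0 < 4 * t + 1 by lra.
rewrite -(ler_pM2r h4); nra.
Qed.


Lemma level (R : realType) (alpha beta M : R) (v : nat -> R -> complex R) :
  0 < alpha -> alpha < beta -> 0 <= M ->
  (forall n x, wt beta x * cabs (v n x) <= M) ->
  (forall X, 0 < X -> forall eps, 0 < eps -> exists2 delta, 0 < delta &
     forall n x y, `|x| <= X -> `|y| <= X -> `|x - y| < delta -> cabs (v n x - v n y) < eps) ->
  forall eps, 0 < eps -> forall I, infin I -> exists J, infin J /\ (forall n, J n -> I n) /\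
    forall m n, J m -> J n -> forall x, wt alpha x * cabs (v m x - v n x) <= eps.
Proof.
move=> a0 ab M0 HM Heq eps e0 I HI.
set X := (4 * M / eps + 1) `^ (beta - alpha)^-1 + 1.
have X0 : 0 < X by rewrite /X ltr_wpDl ?powR_ge0.
have tail := fun n => @tail_bound R alpha beta M eps (v n) a0 ab M0 e0 (HM n).
set W := wt alpha X.
have W1 : 1 <= W by rewrite wt_ge1 // ltW.
have W0 : 0 < W by lra.
set s := eps / (4 * W).
have s0 : 0 < s by rewrite divr_gt0 // mulr_gt0.
have [delta d0 Hd] := Heq X X0 s s0.
set hh := delta / 2.
have hh0 : 0 < hh by rewrite divr_gt0.
set K := (Num.truncn (2 * X / hh)).+1.
set y := fun j : nat => - X + j%:R * hh.
have vb : forall n z, cabs (v n z) <= M.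
  by move=> n z; apply: le_trans (HM n z); rewrite le_wt_mul ?cabs_ge0 // ltW // (lt_trans a0 ab).
have [J1 [HJ1 [J1I HR]]] := refine_fam (fun j n => cRe (v n (y j))) M s s0
   (fun j n => le_trans (cabs_Re _) (vb n (y j))) K I HI.
have [J [HJ [JJ1 HIm]]] := refine_fam (fun j n => cIm (v n (y j))) M s s0
   (fun j n => le_trans (cabs_Im _) (vb n (y j))) K J1 HJ1.
exists J; split => //; split => [n /JJ1 /J1I //|m n Jm Jn x].
case: (lerP `|x| X) => hx; last first.
  apply: le_trans (_ : eps / 4 + eps / 4 <= eps); last by lra.
  apply: le_trans (_ : wt alpha x * (cabs (v m x) + cabs (v n x)) <= _).
    by apply: ler_wpM2l; [rewrite ltW // wt_gt0 // ltW | exact: cabs_sub].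
  by rewrite mulrDr; apply: lerD; apply: tail; rewrite ltW.
have /andP[hx1 hx2] : - X <= x <= X by rewrite -ler_norml.
set j := Num.truncn ((x + X) / hh).
have xX0 : 0 <= (x + X) / hh by apply: divr_ge0; [lra | exact: ltW].
have /andP[j1 j2] := truncn_itv xX0.
rewrite -/j in j1 j2.
have j1' : j%:R * hh <= x + X by rewrite -ler_pdivlMr.
have j2' : x + X < j%:R * hh + hh.
  by move: j2; rewrite ltr_pdivrMr // -addn1 natrD mulrDl mul1r.
have jK : (j < K)%N.
  rewrite /K ltnS truncn_le_nat; apply: le_lt_trans (truncnS_gt _).
  by apply: ler_wpM2r; [rewrite invr_ge0 ltW | lra].
have hy : `|y j| <= X.
  have : 0 <= j%:R * hh by rewrite mulr_ge0 ?ler0n ?ltW.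
  by rewrite ler_norml /y; lra.
have hxy : `|x - y j| < delta.
  have : hh < delta by rewrite /hh; lra.
  by rewrite ltr_norml /y; lra.
have c1 := Hd m x (y j) hx hy hxy.
have c3 : cabs (v n (y j) - v n x) < s by apply: Hd => //; rewrite distrC.
have c2 : cabs (v m (y j) - v n (y j)) <= s + s.
  apply: le_trans (cabs_le _) _; rewrite ReB ImB; apply: lerD.
    exact: (HR j jK m n (JJ1 m Jm) (JJ1 n Jn)).
  exact: (HIm j jK m n Jm Jn).
have tot := cabs_tri3 (v m x) (v m (y j)) (v n (y j)) (v n x).
have wx : wt alpha x <= W.
  by apply: (wt_mono alpha x X (ltW a0)); rewrite (gtr0_norm X0).
apply: le_trans (_ : W * (4 * s) <= _); last first.
  have -> : W * (4 * s) = eps by rewrite /s; field; rewrite gt_eqF.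
  by [].
apply: ler_pM => //; first by rewrite ltW // wt_gt0 // ltW.
  exact: cabs_ge0.
lra.
Qed.


Lemma compact_seq (R : realType) (alpha beta M : R) (v : nat -> R -> complex R) :
  0 < alpha -> alpha < beta -> 0 <= M ->
  (forall n, inC beta (v n)) ->
  (forall n x, wt beta x * cabs (v n x) <= M) ->
  (forall X, 0 < X -> forall eps, 0 < eps -> exists2 delta, 0 < delta &
     forall n x y, `|x| <= X -> `|y| <= X -> `|x - y| < delta -> cabs (v n x - v n y) < eps) ->
  exists phi : nat -> nat, (forall m n, (m < n)%N -> (phi m < phi n)%N) /\
    exists2 g : R -> complex R, inC alpha g &
      (fun n => wnorm alpha (fun x => v (phi n) x - g x)) @ \oo --> (0 : R).
Proof.
move=> a0 ab M0 Hv HM Heq.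
have Hlev := @level R alpha beta M v a0 ab M0 HM Heq.
have hk : forall k : nat, 0 < k.+1%:R^-1 :> R by move=> k; rewrite invr_gt0 ltr0Sn.
have [phi [phiinc Hphi]] := diag_extract
  (fun k m n => forall x, wt alpha x * cabs (v m x - v n x) <= k.+1%:R^-1)
  (fun k I HI => Hlev _ (hk k) I HI).
exists phi; split => //.
have Hc : forall k m n x, (k <= m)%N -> (k <= n)%N ->
    cabs (v (phi m) x - v (phi n) x) <= k.+1%:R^-1.
  move=> k m n x km kn; apply: le_trans (Hphi k m n km kn x).
  by apply: le_wt_mul; [exact: ltW | exact: cabs_ge0].
have cvgRe : forall x, cvg ((fun n => cRe (v (phi n) x)) @ \oo).
  move=> x; apply: cauchy_cvg; apply: cauchy_exP => e e0.
  rewrite /fmapE -ball_normE /ball_.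
  have [k hk'] := small_inv _ e0.
  exists (cRe (v (phi k) x)), k => // m km.
  rewrite /= -ReB; apply: le_lt_trans (cabs_Re _) _; apply: le_lt_trans hk'.
  exact: Hc.
have cvgIm : forall x, cvg ((fun n => cIm (v (phi n) x)) @ \oo).
  move=> x; apply: cauchy_cvg; apply: cauchy_exP => e e0.
  rewrite /fmapE -ball_normE /ball_.
  have [k hk'] := small_inv _ e0.
  exists (cIm (v (phi k) x)), k => // m km.
  rewrite /= -ImB; apply: le_lt_trans (cabs_Im _) _; apply: le_lt_trans hk'.
  exact: Hc.
pose gr := fun x => lim ((fun n => cRe (v (phi n) x)) @ \oo).
pose gi := fun x => lim ((fun n => cIm (v (phi n) x)) @ \oo).
pose g := fun x => (gr x +i* gi x)%C.
have Hg : forall k n x, (k <= n)%N -> wt alpha x * cabs (v (phi n) x - g x) <= 2 * k.+1%:R^-1.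
  move=> k n x kn.
  have wx0 : 0 < wt alpha x by rewrite wt_gt0 // ltW.
  pose c := k.+1%:R^-1 / wt alpha x.
  have Hc' : forall m, (k <= m)%N -> cabs (v (phi n) x - v (phi m) x) <= c.
    by move=> m km; rewrite /c ler_pdivlMr // mulrC; exact: Hphi.
  have hRe : `|cRe (v (phi n) x) - gr x| <= c.
    have H1 : forall m, (k <= m)%N -> `|cRe (v (phi n) x) - cRe (v (phi m) x)| <= c.
      by move=> m km; rewrite -ReB; apply: le_trans (cabs_Re _) (Hc' m km).
    have l1 : gr x <= cRe (v (phi n) x) + c.
      apply: limr_le; first exact: cvgRe.
      exists k => // m /= km; have := H1 m km; rewrite ler_norml => /andP[? ?]; lra.
    have l2 : cRe (v (phi n) x) - c <= gr x.
      apply: limr_ge; first exact: cvgRe.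
      exists k => // m /= km; have := H1 m km; rewrite ler_norml => /andP[? ?]; lra.
    rewrite ler_norml; apply/andP; split; lra.
  have hIm : `|cIm (v (phi n) x) - gi x| <= c.
    have H1 : forall m, (k <= m)%N -> `|cIm (v (phi n) x) - cIm (v (phi m) x)| <= c.
      by move=> m km; rewrite -ImB; apply: le_trans (cabs_Im _) (Hc' m km).
    have l1 : gi x <= cIm (v (phi n) x) + c.
      apply: limr_le; first exact: cvgIm.
      exists k => // m /= km; have := H1 m km; rewrite ler_norml => /andP[? ?]; lra.
    have l2 : cIm (v (phi n) x) - c <= gi x.
      apply: limr_ge; first exact: cvgIm.
      exists k => // m /= km; have := H1 m km; rewrite ler_norml => /andP[? ?]; lra.
    rewrite ler_norml; apply/andP; split; lra.
  apply: le_trans (_ : wt alpha x * (c + c) <= _).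
    apply: ler_wpM2l; first exact: ltW.
    apply: le_trans (cabs_le _) _; rewrite ReB ImB; exact: lerD.
  have -> : wt alpha x * (c + c) = 2 * k.+1%:R^-1.
    by rewrite /c; field; rewrite !gt_eqF // ltr_wpDr.
  by [].
have Hg' : forall k n x, (k <= n)%N -> cabs (v (phi n) x - g x) <= 2 * k.+1%:R^-1.
  move=> k n x kn; apply: le_trans (Hg k n x kn).
  by apply: le_wt_mul; [exact: ltW | exact: cabs_ge0].
exists g.
  split.
    move=> x eps e0.
    have e6 : 0 < eps / 6 by rewrite divr_gt0.
    have [k hk'] := small_inv _ e6.
    have hk2 : forall z, cabs (v (phi k) z - g z) < eps / 3.
      move=> z; apply: le_lt_trans (Hg' k k z (leqnn k)) _. move: hk'; set t := k.+1%:R^-1; lra.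
    have e3 : 0 < eps / 3 by rewrite divr_gt0.
    have [delta d0 Hd] := (proj1 (Hv (phi k))) x (eps / 3) e3.
    exists delta => // y hxy.
    have := cabs_tri3 (g x) (v (phi k) x) (v (phi k) y) (g y).
    have := Hd y hxy; have := hk2 x; have := hk2 y.
    rewrite (cabsB (g x) (v (phi k) x)); lra.
  exists (2 + M) => x.
  apply: le_trans (_ : wt alpha x * (cabs (g x - v (phi 0%N) x) + cabs (v (phi 0%N) x)) <= _).
    apply: ler_wpM2l; first by rewrite ltW // wt_gt0 // ltW.
    by have := cabsD (g x - v (phi 0%N) x) (v (phi 0%N) x); rewrite subrK.
  rewrite mulrDr; apply: lerD.
    by rewrite cabsB; apply: le_trans (Hg 0%N 0%N x (leqnn 0)) _; rewrite invr1 mulr1.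
  apply: le_trans (HM (phi 0%N) x); apply: ler_wpM2r; first exact: cabs_ge0.
  exact: wt_le (ltW ab).
apply/cvgrPdist_le => e e0.
have e2 : 0 < e / 2 by rewrite divr_gt0.
have [k hk'] := small_inv _ e2.
exists k => // n /= kn.
rewrite sub0r normrN ger0_norm; last exact: wnorm_ge0 (ltW a0).
apply: wnorm_le => x; apply: le_trans (Hg k n x kn) _; move: hk'; set t := k.+1%:R^-1; lra.
Qed.

Theorem proposition1 (R : realType) (alpha beta : R)
  (A : (R -> complex R) -> (R -> complex R)) :
  0 < alpha -> alpha < beta ->
  (* A maps C_alpha into C_beta *)
  (forall f, inC alpha f -> inC beta (A f)) ->
  (* A is linear on C_alpha *)
  (forall f g, inC alpha f -> inC alpha g ->
     A (fun x => f x + g x) = (fun x => A f x + A g x)) ->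
  (forall (c : complex R) f, inC alpha f ->
     A (fun x => c * f x) = (fun x => c * A f x)) ->
  (* A is bounded C_alpha -> C_beta *)
  (exists K : R, forall f, inC alpha f -> wnorm beta (A f) <= K * wnorm alpha f) ->
  (* uniform equicontinuity of {(Af)|[-X,X] : f in B_r} for all X, r > 0 *)
  (forall X r : R, 0 < X -> 0 < r -> forall eps : R, 0 < eps ->
     exists2 delta : R, 0 < delta &
       forall f, inC alpha f -> wnorm alpha f < r ->
       forall x y : R, `|x| <= X -> `|y| <= X -> `|x - y| < delta ->
         cabs (A f x - A f y) < eps) ->
  (* A : C_alpha -> C_alpha is compact: every bounded sequence has a
     subsequence whose image converges in C_alpha *)
  forall u : nat -> (R -> complex R),
    (forall n, inC alpha (u n)) ->
    (exists C : R, forall n, wnorm alpha (u n) <= C) ->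
    exists phi : nat -> nat, (forall m n, (m < n)%N -> (phi m < phi n)%N) /\
    exists2 g : R -> complex R, inC alpha g &
      (fun n => wnorm alpha (fun x => A (u (phi n)) x - g x)) @ \oo --> (0 : R).
Proof.
move=> a0 ab Hmap _ _ [K HK] Heqc u Hu [C HC].
have Hv : forall n, inC beta (A (u n)) := fun n => Hmap _ (Hu n).
have M0 : 0 <= `|K| * `|C| by rewrite mulr_ge0.
have HM : forall n x, wt beta x * cabs (A (u n) x) <= `|K| * `|C|.
  move=> n x; apply: le_trans (wnorm_ub _ _ (Hv n) x) _.
  apply: le_trans (HK _ (Hu n)) _.
  have w0 := wnorm_ge0 alpha (u n) (ltW a0).
  apply: le_trans (ler_norm _) _; rewrite normrM; apply: ler_wpM2l => //.
  by rewrite ger0_norm //; apply: le_trans (HC n) (ler_norm _).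
have Heq' : forall X, 0 < X -> forall eps, 0 < eps -> exists2 delta, 0 < delta &
     forall n x y, `|x| <= X -> `|y| <= X -> `|x - y| < delta ->
       cabs (A (u n) x - A (u n) y) < eps.
  move=> X X0 eps e0.
  have r0 : 0 < `|C| + 1 by rewrite ltr_wpDl.
  have [delta d0 Hd] := Heqc X (`|C| + 1) X0 r0 eps e0.
  exists delta => // n x y hx hy hxy; apply: Hd => //.
  by apply: le_lt_trans (HC n) _; apply: le_lt_trans (ler_norm _) _; rewrite ltrDl.
exact: (@compact_seq R alpha beta _ (fun n => A (u n)) a0 ab M0 Hv HM Heq').
Qed.
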